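(* Let $X$ be a Hausdorff space. Assume that there is a closed subset $F\subset X$ such that (a) both $F$ and $X-F$ are totally disconnected, and (b) the quotient space $X/F$ (obtained by collapsing $F$ to a single point) is hereditarily disconnected. Then $\mathcal{K}(X)$ is hereditarily disconnected.
   Context: For a $T_1$ space $X$, $\mathcal{K}(X)$ denotes the set of nonempty compact subsets of $X$ with the Vietoris topology, i.e. the topology generated by the sets $U^+=\{A: A\subset U\}$ and $U^-=\{A: A\cap U\neq\emptyset\}$ for $U$ open in $X$. A space is totally disconnected if for any two distinct points $x,y$ there is a clopen set containing $x$ but not $y$. A space is hereditarily disconnected if every nonempty connected subset is a singleton. *)

(* Defs.v *)
From HB Require Import structures.
From mathcomp Require Import all_boot all_order all_algebra.
From mathcomp Require Import all_classical all_reals all_analysis.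

Set Implicit Arguments.
Unset Strict Implicit.
Unset Printing Implicit Defensive.

Local Open Scope classical_set_scope.

Definition paper_totally_disconnected {T : topologicalType} (A : set T) :=
  forall x y : T, A x -> A y -> x != y ->
    exists U : set (subspace A), [/\ clopen U, U x & ~ U y].

Definition hereditarily_disconnected (T : topologicalType) :=
  forall C : set T, C !=set0 -> connected C -> exists x : T, C = [set x].

Section Collapse.
Context {X : topologicalType} (F : set X).

Definition collapse_rel : rel X := fun x y => (x == y) || `[< F x /\ F y >].

Lemma collapse_refl : reflexive collapse_rel.
Proof. by move=> x; rewrite /collapse_rel eqxx. Qed.

Lemma collapse_sym : symmetric collapse_rel.
Proof.
move=> x y; rewrite /collapse_rel eq_sym; congr (_ || _).
by apply/asboolP/asboolP => -[].
Qed.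

Lemma collapse_trans : transitive collapse_rel.
Proof.
move=> y x z; rewrite /collapse_rel.
case/orP => [/eqP -> //|/asboolP [Fx Fy]].
case/orP => [/eqP <-|/asboolP [_ Fz]]; first by apply/orP; right; apply/asboolP.
by apply/orP; right; apply/asboolP.
Qed.

Canonical collapse_equiv := EquivRel collapse_rel
  collapse_refl collapse_sym collapse_trans.

Definition collapse_quot := {eq_quot collapse_equiv}%qT.

Definition quotient_space := quotient_topology collapse_quot.
End Collapse.

Definition hyperspace (X : topologicalType) :=
  {A : set X | A !=set0 /\ compact A}.

Section Vietoris.
Context (X : topologicalType).

HB.instance Definition _ := gen_eqMixin (hyperspace X).
HB.instance Definition _ := gen_choiceMixin (hyperspace X).

(** Subbasis: U^+ (index (true, U)) and U^- (index (false, U)), U open. *)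
Definition vietoris_index := [set iU : bool * set X | open iU.2].
Definition vietoris_subbase (iU : bool * set X) : set (hyperspace X) :=
  if iU.1 then [set A | sval A `<=` iU.2]
  else [set A | sval A `&` iU.2 !=set0].

HB.instance Definition _ :=
  isSubBaseTopological.Build (hyperspace X) vietoris_index vietoris_subbase.
End Vietoris.

(* Main.v *)
Require Import Defs.
From HB Require Import structures.
From mathcomp Require Import all_boot all_order all_algebra.
From mathcomp Require Import all_classical all_reals all_analysis.
From mathcomp Require Import finmap.
Local Open Scope classical_set_scope.

Lemma vopen (X : topologicalType) (i : bool * set X) : open i.2 ->
  open (vietoris_subbase i : set (hyperspace X)).
Proof.
move=> oi.
exists [set vietoris_subbase i]; last by rewrite bigcup_set1.
move=> _ ->; exists [fset i]%fset.
  by move=> j; rewrite !inE => /eqP ->; apply/mem_set.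
rewrite (_ : [set` [fset i]%fset] = [set i]); last first.
  by apply/seteqP; split => j /=; rewrite !inE => /eqP.
by rewrite bigcap_set1.
Qed.

Lemma lemQ (X : topologicalType) (C : set (hyperspace X)) (A : hyperspace X)
  (O1 O2 : set X) : connected C -> C A -> open O1 -> open O2 ->
  (forall B y, C B -> sval B y -> O1 y \/ O2 y) ->
  (forall B y, C B -> sval B y -> O1 y -> O2 y -> False) ->
  (forall y, sval A y -> ~ O2 y) ->
  forall B y, C B -> sval B y -> ~ O2 y.
Proof.
move=> cC CA oO1 oO2 cov dis A2 B y CB By O2y.
have E : C `&` [set D | sval D `<=` O1] = C.
  apply: cC.
  - exists A; split => // z Az; have [//|/A2] := cov A z CA Az; by [].
  - exists (vietoris_subbase (true, O1)); first exact: vopen.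
    by [].
  - exists (~` vietoris_subbase (false, O2)).
      by apply: open_closedC; apply: vopen.
    apply/seteqP; split => D /= [CD HD]; split => //.
      by move=> [z [Dz O2z]]; apply: (dis D z CD Dz (HD z Dz) O2z).
    move=> z Dz; have [//|O2z] := cov D z CD Dz.
    by exfalso; apply: HD; exists z.
have : (C `&` [set D | sval D `<=` O1]) B by rewrite E.
by move=> [_ /(_ y By) O1y]; apply: (dis B y CB By O1y O2y).
Qed.

Lemma sep_lemma (T : topologicalType) (K : set T) (x : T) (P : set T -> Prop) :
  compact K -> P setT -> (forall E1 E2, P E1 -> P E2 -> P (E1 `&` E2)) ->
  (forall a, K a -> exists N E, [/\ open N, N a, P E, E x &
      forall y, E y -> N y -> False]) ->
  exists E, [/\ P E, E x & forall y, E y -> K y -> False].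
Proof.
move=> cK PT PI H; apply: contrapT => nE.
have ne : forall E, P E -> E x -> (K `&` E) !=set0.
  move=> E PE Ex; apply: contrapT => h; apply: nE; exists E; split=> // y Ey Ky.
  by apply: h; exists y.
pose F := filter_from [set E | P E /\ E x] (fun E => K `&` E).
have FF : ProperFilter F.
  apply: filter_from_proper; last by move=> E [PE Ex]; apply: ne.
  apply: filter_from_filter; first by exists setT.
  move=> E1 E2 [P1 x1] [P2 x2]; exists (E1 `&` E2); first by split; [apply: PI|].
  by move=> y [Ky [E1y E2y]]; split; split.
have FK : F K by exists setT => //; move=> y [].
have [a [Ka cla]] := cK F FF FK.
have [N [E [oN Na PE Ex EN]]] := H a Ka.
have : (K `&` E) `&` N !=set0.
  by apply: cla; [exists E | apply: open_nbhs_nbhs].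
by case=> y [[_ Ey] Ny]; apply: (EN y).
Qed.

Lemma sub_clopen (T : topologicalType) (D : set T) (U : set (subspace D)) :
  clopen U ->
  (exists2 H : set T, open H & H `&` D = U `&` D) /\
  (exists2 G : set T, closed G & G `&` D = U `&` D).
Proof.
move=> [oU cU]; split; [exact/open_subspaceP | exact/closed_subspaceP].
Qed.

Section Main.
Variables (X : topologicalType) (F : set X).
Hypotheses (hX : hausdorff_space X) (cF : closed F)
  (tdF : paper_totally_disconnected F)
  (tdC : paper_totally_disconnected (~` F))
  (hdY : hereditarily_disconnected (quotient_space F)).

Local Open Scope quotient_scope.
Let pi := (\pi_(quotient_space F) : X -> quotient_space F).
Let piF (x y : X) : F x -> F y -> pi x = pi y.
Proof.
move=> Fx Fy. apply/eqquotP. rewrite /collapse_rel; apply/orP; right; exact/asboolP.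
Qed.
Let piE (x y : X) : pi x = pi y -> x = y \/ (F x /\ F y).
Proof.
move/eqquotP; rewrite /= /collapse_rel => /orP [/eqP ->|/asboolP]; [by left|by right].
Qed.
Let pio (U : set (quotient_space F)) : open U -> open (pi @^-1` U).
Proof. move=> oU. by move/continuousP: (@pi_continuous X (collapse_quot F)) => /(_ U oU). Qed.
Let pic (U : set (quotient_space F)) : closed U -> closed (pi @^-1` U).
Proof. move=> oU. by move/continuous_closedP: (@pi_continuous X (collapse_quot F)) => /(_ U oU). Qed.

Lemma key (C : set (hyperspace X)) (A B : hyperspace X) :
  connected C -> C A -> C B -> sval B `<=` sval A.
Proof.
move=> cC CA CB.
set S := [set x | exists2 D, C D & sval D x].
have cA : compact (sval A) by case: (proj2_sig A).
have clA : closed (sval A) by apply: compact_closed.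
have Q := @lemQ X C A _ _ cC CA.
have oCF : open (~` F) by apply: closed_openC.
have core : forall (O Cl : set X) x, open O -> closed Cl ->
    (forall y, Cl y -> ~ F y) ->
    (forall s, S s -> ~ sval A s -> (O s <-> Cl s)) ->
    S x -> ~ sval A x -> O x -> False.
  move=> O Cl x oO cCl ClF iff Sx nAx Ox.
  have Clx : Cl x by apply/(iff x Sx nAx).
  have nFx := ClF x Clx.
  have cK : compact (sval A `&` Cl) by apply: compact_closedI.
  have [E [[oE cE] Ex EK]] : exists E, [/\ (open E /\ closed (E `&` Cl)), E x &
      forall y, E y -> (sval A `&` Cl) y -> False].
    apply: sep_lemma => //.
    - by split; [exact: openT | rewrite setTI].
    - move=> E1 E2 [h1 h2] [h3 h4]; split; first exact: openI.
      rewrite (_ : E1 `&` E2 `&` Cl = (E1 `&` Cl) `&` (E2 `&` Cl)).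
        exact: closedI.
      by apply/seteqP; split => y /=; tauto.
    - move=> a [Aa Cla].
      have nFa := ClF a Cla.
      have xa : x != a by apply/eqP => xa; apply: nAx; rewrite xa.
      have [U [clU Ux nUa]] := tdC x a nFx nFa xa.
      have [[H oH HU] [G cG GU]] := sub_clopen _ _ _ clU.
      have eHG : forall y, ~ F y -> (H y <-> G y).
        move=> y nFy; split => Hy.
          have : (G `&` ~` F) y by rewrite GU -HU.
          by case.
        have : (H `&` ~` F) y by rewrite HU -GU.
        by case.
      exists (~` G), (~` F `&` H); split.
      + exact: closed_openC.
      + move=> Ga; have : (U `&` ~` F) a by rewrite -GU.
        by case.
      + split; first exact: openI.
        rewrite (_ : ~` F `&` H `&` Cl = G `&` Cl); first exact: closedI.
        apply/seteqP; split => y /=.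
          by move=> [[nFy Hy] Cly]; split => //; apply/(eHG y nFy).
        move=> [Gy Cly]; have nFy := ClF y Cly.
        by split => //; split => //; apply/(eHG y nFy).
      + split => //.
        have : (U `&` ~` F) x by [].
        by rewrite -HU; case.
      + move=> y [nFy Hy] nGy; apply: nGy; apply/(eHG y nFy).
        by [].
  case: (Sx) => D0 CD0 D0x.
  apply: (Q (~` (E `&` Cl)) (O `&` E `&` ~` sval A) _ _ _ _ _ D0 x CD0 D0x).
  - by apply: closed_openC.
  - by apply: openI; [apply: openI | apply: closed_openC].
  - move=> D y CD Dy.
    have [ECy|nECy] := pselect ((E `&` Cl) y); last by left.
    right; case: ECy => Ey Cly.
    have nAy : ~ sval A y by move=> Ay; apply: (EK y Ey).
    by split => //; split => //; apply/(iff y _ nAy) => //; exists D.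
  - move=> D y CD Dy O1y [[Oy Ey] nAy]; apply: O1y; split => //.
    by apply/(iff y _ nAy) => //; exists D.
  - by move=> y Ay [_ nAy].
  - by split.
have step1 : forall x, S x -> ~ sval A x -> F x.
  move=> x Sx nAx; apply: contrapT => nFx.
  have [[f0 Ff0]|noF] := pselect (exists f, F f); last first.
    apply: (core setT setT x) => //.
    - exact: openT.
    - by move=> y _ Fy; apply: noF; exists y.
  pose Sq := pi @` ((S `\` sval A) `|` F).
  pose p := pi f0.
  have Sqp : Sq p by exists f0 => //; right.
  have gen : forall OY ClY, open OY -> closed ClY -> Sq `&` OY = Sq `&` ClY ->
      ~ OY p -> (Sq `&` OY) !=set0 -> False.
    move=> OY ClY oOY cClY eq nOp [_ [[z Sz <-] OYz]].
    have nFz : ~ F z by move=> Fz; apply: nOp; rewrite /p (piF f0 z Ff0 Fz).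
    case: Sz => [[Sz nAz]|Fz]; last exact: nFz.
    apply: (core (pi @^-1` OY) (pi @^-1` ClY) z) => //.
    - exact: pic.
    - move=> y ClYy Fy.
      have : (Sq `&` ClY) p by split => //; rewrite /p (piF f0 y Ff0 Fy).
      by rewrite -eq => -[_].
    - move=> s Ss nAs.
      have Sqs : Sq (pi s) by exists s => //; left.
      split => h.
        have : (Sq `&` OY) (pi s) by [].
        by rewrite eq => -[].
      have : (Sq `&` ClY) (pi s) by [].
      by rewrite -eq => -[].
  have conn : connected Sq.
    move=> B0 neB0 [OY oOY eqO] [ClY cClY eqC].
    apply: contrapT => neq.
    have [B0p|nB0p] := pselect (B0 p).
    - apply: (gen (~` ClY) (~` OY)).
      + exact: closed_openC.
      + exact: open_closedC.
      + apply/seteqP; split => y [Sqy h]; split => // h2; apply: h.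
          have : (Sq `&` OY) y by [].
          by rewrite -eqO eqC => -[].
        have : (Sq `&` ClY) y by [].
        by rewrite -eqC eqO => -[].
      + move=> nClp; have : B0 p := B0p.
        by rewrite eqC => -[_].
      + apply: contrapT => h; apply: neq; apply/seteqP; split.
          by rewrite eqO => y [].
        move=> y Sqy; apply: contrapT => nB0y; apply: h; exists y; split => //.
        by move=> ClYy; apply: nB0y; rewrite eqC.
    - apply: (gen OY ClY) => //.
      + by rewrite -eqO -eqC.
      + by move=> OYp; apply: nB0p; rewrite eqO.
      + by rewrite -eqO.
  have [y Sqy] := hdY Sq (ex_intro _ p Sqp) conn.
  have h1 : Sq p := Sqp.
  have h2 : Sq (pi x) by exists x => //; left.
  rewrite Sqy /= in h1 h2.
  have e : pi x = pi f0 by rewrite h2 -h1.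
  have [xf|[Fx _]] := piE x f0 e; apply: nFx; last by [].
  by rewrite xf.
have step2 : forall x, S x -> sval A x.
  move=> x Sx; apply: contrapT => nAx.
  have Fx := step1 x Sx nAx.
  have cK : compact (sval A `&` F) by apply: compact_closedI.
  have [E [[c1 c2] Ex EK]] : exists E, [/\ (closed (F `&` E) /\ closed (F `&` ~` E)), E x &
      forall y, E y -> (sval A `&` F) y -> False].
    apply: sep_lemma => //.
    - by rewrite setIT setCT setI0; split => //; exact: closed0.
    - move=> E1 E2 [h1 h2] [h3 h4]; split.
      + rewrite (_ : F `&` (E1 `&` E2) = (F `&` E1) `&` (F `&` E2)).
          exact: closedI.
        by apply/seteqP; split => y /=; tauto.
      + rewrite (_ : F `&` ~` (E1 `&` E2) = (F `&` ~` E1) `|` (F `&` ~` E2)).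
          exact: closedU.
        apply/seteqP; split => y /=.
          move=> [Fy nE]; have [e1|ne1] := pselect (E1 y).
            by right; split => // e2; apply: nE.
          by left.
        by move=> [[Fy ne]|[Fy ne]]; split => // -[]; tauto.
    - move=> a [Aa Fa].
      have xa : x != a by apply/eqP => xa; apply: nAx; rewrite xa.
      have [U [clU Ux nUa]] := tdF x a Fx Fa xa.
      have [[H oH HU] [G cG GU]] := sub_clopen _ _ _ clU.
      have eHG : forall y, F y -> (H y <-> G y).
        move=> y Fy; split => Hy.
          have : (G `&` F) y by rewrite GU -HU.
          by case.
        have : (H `&` F) y by rewrite HU -GU.
        by case.
      exists (~` G), G; split.
      + exact: closed_openC.
      + move=> Ga; have : (U `&` F) a by rewrite -GU.
        by case.
      + split; first exact: closedI.
        rewrite (_ : F `&` ~` G = F `&` ~` H).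
          by apply: closedI => //; apply: open_closedC.
        apply/seteqP; split => y [Fy h]; split => // h2; apply: h; apply/(eHG y Fy) => //.
      + have : (U `&` F) x by [].
        by rewrite -GU; case.
      + by move=> y Gy nGy.
  case: (Sx) => D0 CD0 D0x.
  apply: (Q (~` (F `&` E)) (~` (sval A `|` (F `&` ~` E))) _ _ _ _ _ D0 x CD0 D0x).
  - exact: closed_openC.
  - by apply: closed_openC; apply: closedU.
  - move=> D y CD Dy; have [FEy|nFEy] := pselect ((F `&` E) y); last by left.
    right; case: FEy => Fy Ey.
    by move=> [Ay|[_ nEy]]; [apply: (EK y Ey) | apply: nEy].
  - move=> D y CD Dy O1y O2y.
    have nAy : ~ sval A y by move=> Ay; apply: O2y; left.
    have Sy : S y by exists D.
    have Fy := step1 y Sy nAy.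
    have [Ey|nEy] := pselect (E y); [apply: O1y | apply: O2y; right]; by split.
  - by move=> y Ay; apply; left.
  - by move=> [Ax|[_ nEx]]; [exact: nAx Ax | exact: nEx Ex].
by move=> y By; apply: step2; exists B.
Qed.
End Main.

Theorem mainTheorem1 (X : topologicalType) (F : set X) :
  hausdorff_space X ->
  closed F ->
  paper_totally_disconnected F ->
  paper_totally_disconnected (~` F) ->
  hereditarily_disconnected (quotient_space F) ->
  hereditarily_disconnected (hyperspace X).
Proof.
move=> hX cF tdF tdC hdY C [A CA] cC; exists A.
apply/seteqP; split => [B CB|_ ->] //.
have e : sval B = sval A.
  by apply/seteqP; split; apply: (@key X F hX cF tdF tdC hdY C)...
have inj : forall (u v : hyperspace X), sval u = sval v -> u = v.
  by move=> [u pu] [v pv] /= euv; subst v; congr exist; exact: Prop_irrelevance.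
exact: inj.
Qed.
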